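(* Let $p$ be an odd prime and let $k$ be an integer with $2\le k\le p-1$. Let $k^{-1}$ denote the least non-negative integer congruent to the inverse of $k$ modulo $p$, and let $K=\min\{k,k^{-1}\}$. Let $\phi$ be the orthomorphism of $\mathbb{Z}_p$ given by $\phi(x)=kx$, and let $\phi'$ be any orthomorphism of $\mathbb{Z}_p$ with $\phi'\neq\phi$. Then the number of $x\in\mathbb{Z}_p$ with $\phi(x)\neq\phi'(x)$ is at least $\log_K(p)+1$.
   Context: An orthomorphism of the cyclic group $\mathbb{Z}_p$ is a permutation $\psi$ of $\mathbb{Z}_p$ such that the map $x\mapsto \psi(x)-x$ (computed modulo $p$) is also a permutation of $\mathbb{Z}_p$. The distance between two orthomorphisms is the number of $x$ at which they differ. *)

(* Defs.v *)
From Stdlib Require Import Reals.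
From mathcomp Require Import all_boot all_algebra.
Set Implicit Arguments. Unset Strict Implicit. Unset Printing Implicit Defensive.
Import GRing.Theory.
Local Open Scope ring_scope.

Definition orthomorphism (p : nat) (psi : 'Z_p -> 'Z_p) : Prop :=
  bijective psi /\ bijective (fun x => psi x - x).

Definition odist (p : nat) (f g : 'Z_p -> 'Z_p) : nat :=
  #|[set x : 'Z_p | f x != g x]|%N.

Definition inv_mod (p k : nat) : nat :=
  nat_of_ord ((k%:R : 'Z_p)^-1).

Definition mulmap (p k : nat) : 'Z_p -> 'Z_p := fun x => k%:R * x.

Arguments orthomorphism p psi : clear implicits.
Arguments odist p f g : clear implicits.
Arguments mulmap p k x : clear implicits.
Arguments inv_mod p k : clear implicits.

(* Main.v *)
Require Import Defs.
From Stdlib Require Import Reals.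
From mathcomp Require Import all_boot all_algebra.
From Stdlib Require Import Lra FunctionalExtensionality.
Lemma real_part (p K d : nat) : (2 <= K)%N -> (0 < p)%N -> (0 < d)%N ->
  (p <= K ^ d.-1)%N ->
  Rge (INR d) (Rplus (Rdiv (ln (INR p)) (ln (INR K))) (INR 1)).
Proof.
Local Open Scope R_scope.
move=> K2 p0 d0 H.
have HK : (1 < INR K) by apply: lt_1_INR; apply/ltP.
have lK : (0 < ln (INR K)) by rewrite -ln_1; apply: ln_increasing; lra.
have Hp0 : (0 < INR p) by apply: lt_0_INR; apply/ltP.
have E : forall a b, Nat.pow a b = (a ^ b)%N.
  by move=> a b; elim: b => //= b IH; rewrite IH expnS.
have Hle : (INR p <= INR K ^ d.-1) by rewrite -pow_INR; apply: le_INR; apply/leP; rewrite E.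
have Hln : (ln (INR p) <= INR d.-1 * ln (INR K)).
  rewrite -ln_pow; last lra.
  case: (Rle_lt_or_eq_dec _ _ Hle) => h; last by rewrite h; lra.
  by left; apply: ln_increasing.
have Hd : INR d = (INR d.-1 + 1) by rewrite -S_INR prednK.
have : (ln (INR p) / ln (INR K) <= INR d.-1).
  apply (Rmult_le_reg_r (ln (INR K))) => //.
  unfold Rdiv; rewrite Rmult_assoc Rinv_l; lra.
move=> H2; rewrite (_ : INR 1 = 1) //; lra.
Qed.

From mathcomp Require Import all_order.
From mathcomp Require Import ring lra.
Import GRing.Theory Num.Theory Order.TTheory.
Set Implicit Arguments. Unset Strict Implicit.
Local Open Scope ring_scope.

Definition ddom (R : realFieldType) n (M : 'M[R]_n) :=
  (forall i j, i != j -> M i j <= 0) /\ (forall i, 0 <= \sum_j M i j).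

Lemma ddom_diag (R : realFieldType) n (M : 'M[R]_n) : ddom M -> forall i, 0 <= M i i.
Proof.
move=> [Hoff Hsum] i; have := Hsum i; rewrite (bigD1 i) //=.
move=> H; apply: le_trans H _; rewrite -[leRHS]addr0 lerD2l.
by apply: sumr_le0 => j ji; apply: Hoff; rewrite eq_sym.
Qed.

Lemma ddom_det (R : realFieldType) n (M : 'M[R]_n) : ddom M -> 0 <= \det M <= \prod_i M i i.
Proof.
elim: n M => [|n IH] M HM.
  by rewrite det_mx00 big_ord0 lexx ler01.
have Hd := ddom_diag HM.
case: HM => Hoff Hsum.
pose M' : 'M[R]_(1 + n) := M.
pose i0 : 'I_(1 + n) := lshift n (0 : 'I_1).
pose a := M' i0 i0.
have Ha : 0 <= a := Hd _.
have HP : \prod_(i < n.+1) M i i = a * \prod_(i < n) M' (rshift 1 i) (rshift 1 i).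
  rewrite big_ord_recl; congr (_ * _).
    by congr (M _ _); apply: val_inj.
  by apply: eq_bigr => i _; congr (M _ _); apply: val_inj.
rewrite HP.
have HB := submxK M'.
have [a0|apos] := eqVneq a 0.
  have Hr : ursubmx M' = 0.
    apply/matrixP => i j; rewrite !mxE (ord1 i).
    have Hs : 0 <= \sum_(j < 1 + n) M' i0 j := Hsum i0.
    have: M' i0 (rshift 1 j) <= 0 by apply: Hoff.
    move=> Hle; apply/eqP; rewrite eq_le Hle /=.
    move: Hs; rewrite big_split_ord /=.
    rewrite big_ord1 -/a a0 add0r (bigD1 j) //= => H.
    apply: le_trans H _; rewrite -[leRHS]addr0 lerD2l.
    by apply: sumr_le0 => k _; apply: Hoff.
  have Hul : ulsubmx M' = 0.
    apply/matrixP => i j; rewrite !mxE (ord1 i) (ord1 j); exact: a0.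
  rewrite a0 mul0r -[\det M]/(\det M') -HB Hr Hul det_lblock det_mx11 mxE mul0r lexx //.
have Hapos : 0 < a by rewrite lt_def apos Ha.
pose r := ursubmx M'. pose s := dlsubmx M'. pose B := drsubmx M'.
pose S := B - a^-1 *: (s *m r).
have Hul : ulsubmx M' = a%:M.
  by rewrite [ulsubmx M']mx11_scalar !mxE.
have Hfac : M' = block_mx 1%:M 0 (a^-1 *: s) 1%:M *m block_mx a%:M r 0 S.
  rewrite mulmx_block !mul1mx !mul0mx !addr0 ?add0r.
  rewrite -!scalemxAl mul_mx_scalar scalerA mulVf // scale1r.
  rewrite /S addrC subrK -Hul.
  by rewrite -[in LHS]HB.
have Hdet : \det M = a * \det S.
  rewrite -[\det M]/(\det M') Hfac det_mulmx det_lblock det_ublock !det1 mul1r det_scalar1.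
  by rewrite mul1r.
rewrite Hdet.
have SE : forall i j, S i j = M' (rshift 1 i) (rshift 1 j) - a^-1 * (M' (rshift 1 i) i0 * M' i0 (rshift 1 j)).
  by move=> i j; rewrite !mxE big_ord1 /s /r !mxE.
have Hoff' : forall i j : 'I_(1 + n), i != j -> M' i j <= 0 by [].
have Hri : forall i, rshift 1 i != i0.
  by move=> i; apply/eqP => /(f_equal val) /=.
have Hsum' : forall i : 'I_(1 + n), 0 <= M' i i0 + \sum_(j < n) M' i (rshift 1 j).
  by move=> i; have := Hsum i; rewrite -[\sum_j M i j]/(\sum_(j < 1 + n) M' i j) big_split_ord big_ord1.
have Hainv : 0 <= a^-1 by rewrite invr_ge0.
have Haa : a^-1 * a = 1 by rewrite mulVf.
have HS : ddom S.
  split.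
  - move=> i j ij; rewrite SE.
    have h1 : M' (rshift 1 i) (rshift 1 j) <= 0.
      by apply: Hoff'; rewrite (inj_eq (@rshift_inj _ _)).
    have h2 : M' (rshift 1 i) i0 <= 0 by apply: Hoff'.
    have h3 : M' i0 (rshift 1 j) <= 0 by apply: Hoff'; rewrite eq_sym.
    have : 0 <= a^-1 * (M' (rshift 1 i) i0 * M' i0 (rshift 1 j)) by rewrite mulr_ge0 // mulr_le0.
    lra.
  - move=> i.
    under eq_bigr do rewrite SE.
    rewrite sumrB -mulr_sumr -mulr_sumr.
    have h1 := Hsum' (rshift 1 i).
    have h0 := Hsum' i0; rewrite -/a in h0.
    have h2 : M' (rshift 1 i) i0 <= 0 by apply: Hoff'.
    set rho := \sum_(j < n) M' i0 (rshift 1 j) in h0 *.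
    set sB := \sum_(j < n) M' (rshift 1 i) (rshift 1 j) in h1 *.
    set si := M' (rshift 1 i) i0 in h1 h2 *.
    set t := a^-1 in Hainv Haa *.
    have : 0 <= (rho + a) * (- (t * si)).
      apply: mulr_ge0; first lra; rewrite oppr_ge0; exact: mulr_ge0_le0.
    nra.
have [HS1 HS2] := andP (IH S HS).
have HSB : \prod_i S i i <= \prod_(i < n) M' (rshift 1 i) (rshift 1 i).
  apply: ler_prod => i _; rewrite ddom_diag //= SE.
  have h2 : M' (rshift 1 i) i0 <= 0 by apply: Hoff'.
  have h3 : M' i0 (rshift 1 i) <= 0 by apply: Hoff'; rewrite eq_sym.
  have : 0 <= a^-1 * (M' (rshift 1 i) i0 * M' i0 (rshift 1 i)) by rewrite mulr_ge0 // mulr_le0.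
  lra.
rewrite mulr_ge0 //= ler_pM2l //; exact: le_trans HS2 HSB.
Qed.
Lemma connect_prop (T : finType) (e : rel T) (S : pred T) :
  (forall x z, e x z -> S x -> S z) -> forall x z, connect e x z -> S x -> S z.
Proof.
move=> HS x z /connectP [q Hq ->] {z}.
elim: q x Hq => [|a q IH] x //= /andP [exa Hq] Sx.
by apply: IH => //; apply: HS exa Sx.
Qed.

Lemma sum_delta (R : nzSemiRingType) (T : finType) (y : T -> R) (x : T) :
  \sum_j y j * (j == x)%:R = y x.
Proof.
rewrite (bigD1 x) //= eqxx mulr1 big1 ?addr0 // => j /negPf ->; by rewrite mulr0.
Qed.

Lemma maxp (T : finType) (R : realFieldType) (K : nat) (C' : {set T}) (e : rel T)
  (u w : T -> T) (v0 : T) (y : T -> R) :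
  (1 < K)%N -> v0 \notin C' ->
  (forall x, x \in C' -> connect e x v0) ->
  (forall x z, x \in C' -> e x z -> z = u x \/ z = w x) ->
  (forall i, i \notin C' -> y i = 0) ->
  (forall i, i \in C' -> K%:R * y i = y (u i) + K.-1%:R * y (w i)) ->
  forall i, y i <= 0.
Proof.
move=> K1 v0C Hc He Hz Hrel i; rewrite leNgt; apply/negP => yi.
pose j := [arg max_(j > i) y j]%O.
have jmax : (forall k, y k <= y j).
  by rewrite /j; case: (arg_maxP (i0 := i) (P := predT) y isT) => k _ H k'; apply: H.
have yj : 0 < y j by apply: lt_le_trans yi (jmax i).
have inC : forall x, 0 < y x -> x \in C'.
  by move=> x yx; apply/negPn/negP => /Hz yx0; rewrite yx0 ltxx in yx.
have HK : (K%:R : R) = K.-1%:R + 1 by rewrite natr1 prednK // ltnW.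
have HK1 : (0 : R) < K.-1%:R by rewrite ltr0n -ltnS prednK // ltnW.
have HS : forall x z, e x z -> (fun x => y x == y j) x -> (fun x => y x == y j) z.
  move=> x z exz /= /eqP yx.
  have xC : x \in C' by apply: inC; rewrite yx.
  have := Hrel x xC; rewrite yx HK => H.
  have h1 := jmax (u x); have h2 := jmax (w x).
  have hu : y (u x) = y j by nra.
  have hw : y (w x) = y j by nra.
  by case: (He x z xC exz) => ->; apply/eqP.
have := connect_prop HS (Hc j (inC j yj)) (eqxx _).
by rewrite (Hz v0 v0C) => /eqP H; rewrite -H ltxx in yj.
Qed.
Lemma graph_setup (T : finType) (D : {set T}) (u w : T -> T) :
  D != set0 ->
  (forall v, v \in D -> u v \in D /\ w v \in D) ->
  let e : rel T := fun x y => (x \in D) && ((y == u x) || (y == w x)) in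
  exists v0, exists C : {set T},
    [/\ v0 \in C, C \subset D,
        (forall x, x \in C -> u x \in C /\ w x \in C) &
        (forall x, x \in C -> connect e x v0)].
Proof.
move=> Dn0 HD e.
pose reach x := [set y | connect e x y].
have [v00 v00D] := set0Pn _ Dn0.
pose v0 := [arg min_(v < v00 in D) #|reach v|].
have [v0D v0min] : v0 \in D /\ forall v, v \in D -> (#|reach v0| <= #|reach v|)%N.
  by rewrite /v0; case: arg_minnP => // v vD H; split => // x xD; apply: H.
have eD : forall x y, e x y -> x \in D -> y \in D.
  move=> x y /andP [xD /orP [] /eqP ->] _; by have [] := HD x xD.
have CD : forall y, connect e v0 y -> y \in D.
  by move=> y H; apply: (connect_prop eD H).
exists v0, (reach v0); split.
- by rewrite inE connect0.
- by apply/subsetP => y; rewrite inE; apply: CD.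
- move=> x; rewrite !inE => Hx; have xD := CD _ Hx.
  by split; apply: (connect_trans Hx); apply: connect1; rewrite /e xD eqxx ?orbT.
- move=> x; rewrite inE => Hx; have xD := CD _ Hx.
  have sub : reach x \subset reach v0.
    by apply/subsetP => y; rewrite !inE; apply: connect_trans.
  have : reach x == reach v0 by rewrite eqEcard sub /= v0min.
  move/eqP => Hxe.
  have : v0 \in reach v0 by rewrite inE connect0.
  by rewrite -Hxe inE.
Qed.
Lemma core (p K : nat) (D : {set 'Z_p}) (u w : 'Z_p -> 'Z_p) :
  prime p -> (1 < K)%N -> D != set0 ->
  (forall v, v \in D -> [/\ u v \in D, w v \in D, u v != v &
      (K%:R : 'Z_p) * v = u v + K.-1%:R * w v]) ->
  (p <= K ^ #|D|.-1)%N.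
Proof.
move=> pr K1 Dn0 HD.
have HD2 : forall v, v \in D -> u v \in D /\ w v \in D.
  by move=> v vD; case: (HD v vD).
have [v0 [C [v0C CD Ccl Csc]]] := graph_setup Dn0 HD2.
pose C' := C :\ v0.
pose n := (Zp_trunc p).+2.
pose Nm (R : comNzRingType) : 'M[R]_n := \matrix_(i, j)
  ((if i \in C' then (K * (i == j))%:R else (i == j)%:R)
   - ((i \in C') && (j \in C') && (j == u i))%:R
   - K.-1%:R * ((i \in C') && (j \in C') && (j == w i))%:R).
have Hmap : forall R : comNzRingType, map_mx intr (Nm int) = Nm R.
  move=> R; apply/matrixP => i j; rewrite !mxE.
  by case: (i \in C'); rewrite /= !(rmorphB, rmorphM, rmorph_nat, rmorph0, rmorph1).
pose z := \det (Nm int).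
have Hz : forall R : comNzRingType, (z%:~R : R) = \det (Nm R).
  by move=> R; rewrite -Hmap det_map_mx.
have v0C' : v0 \notin C' by rewrite !inE eqxx.
have C'C : forall x, x \in C' -> x \in C by move=> x; rewrite !inE => /andP [].
have HK : forall R : nzRingType, (K%:R : R) = K.-1%:R + 1.
  by move=> R; rewrite natr1 prednK // ltnW.
have Hdd : ddom (Nm rat).
  split.
  - move=> i j ij; rewrite !mxE (_ : (i == j) = false); last by apply/eqP => E; move: ij; rewrite E eqxx.
    rewrite muln0 if_same sub0r.
    have h1 := ler0n rat ((i \in C') && (j \in C') && (j == u i)).
    have h2 : 0 <= (K.-1%:R : rat) * ((i \in C') && (j \in C') && (j == w i))%:R.
      by rewrite mulr_ge0.
    lra.
  - move=> i; rewrite (eq_bigr (fun j => Nm rat i j)) //.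
    under eq_bigr do rewrite mxE.
    case: (boolP (i \in C')) => iC /=.
    + rewrite !sumrB -mulr_sumr.
      have s1 : \sum_j ((K * (i == j))%:R : rat) = K%:R.
        rewrite (bigD1 i) //= eqxx muln1 big1 ?addr0 // => j ji.
        by rewrite eq_sym (negPf ji) muln0.
      have s2 : forall x, \sum_j (((j \in C') && (j == x))%:R : rat) <= 1.
        move=> x; rewrite (bigD1 x) //= eqxx andbT big1 ?addr0.
          by case: (x \in C').
        by move=> j /negPf ->; rewrite andbF.
      rewrite s1; have t1 := s2 (u i); have t2 := s2 (w i).
      have := HK rat; have : (0 : rat) <= K.-1%:R by [].
      nra.
    + rewrite (bigD1 i) //= eqxx big1 ?addr0.
        by rewrite mulr0 subr0.
      by move=> j ji; rewrite eq_sym (negPf ji) !mulr0 !subr0.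
have Hdiag : forall i, Nm rat i i <= (if i \in C' then K else 1)%:R.
  move=> i; rewrite mxE eqxx muln1; case: (i \in C') => /=.
  - have h1 := ler0n rat (i == u i).
    have h2 : 0 <= (K.-1%:R : rat) * (i == w i)%:R by rewrite mulr_ge0.
    lra.
  - by rewrite mulr0 !subr0.
have Hprod : \det (Nm rat) <= (K ^ #|C'|)%:R.
  have [_ H] := andP (ddom_det Hdd).
  apply: (le_trans H); rewrite -prod_nat_const big_mkcond natr_prod /=.
  rewrite [in X in _ <= X]big_mkcond /=; apply: ler_prod => i _; rewrite ddom_diag //=.
  by have := Hdiag i; case: (i \in C').
have Hge : 0 <= \det (Nm rat) by have [] := andP (ddom_det Hdd).
have Hne : \det (Nm rat) != 0.
  apply/negP => H0.
  have : \det (Nm rat)^T == 0 by rewrite det_tr.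
  case/det0P => v vn0 vN.
  pose y (j : 'Z_p) : rat := v 0 j.
  have Hrow : forall i, \sum_j y j * Nm rat i j = 0.
    move=> i; have := congr1 (fun M : 'rV_n => M 0 i) vN.
    rewrite !mxE => H; rewrite -[RHS]H; apply: eq_bigr => j _; by rewrite [X in _ = _ * X]mxE mxE.
  have Hy0 : forall i, i \notin C' -> y i = 0.
    move=> i iC; have := Hrow i.
    under eq_bigr do rewrite mxE (negPf iC) /= mulr0 !subr0.
    under eq_bigr do rewrite eq_sym.
    by rewrite sum_delta.
  have Hrel : forall i, i \in C' -> K%:R * y i = y (u i) + K.-1%:R * y (w i).
    move=> i iC; have := Hrow i.
    under eq_bigr => j _ do rewrite mxE iC /=.
    have E : forall x j, y j * ((j \in C') && (j == x))%:R = y j * (j == x)%:R.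
      move=> x j; case: (boolP (j \in C')) => jC //=.
      by rewrite (Hy0 j jC) !mul0r.
    under eq_bigr => j _ do rewrite mulrBr mulrBr E mulrCA E natrM mulrCA eq_sym.
    rewrite !sumrB -!mulr_sumr !sum_delta => H.
    apply/eqP; rewrite -subr_eq0 -H; apply/eqP; ring.
  have Hle : forall y : 'Z_p -> rat, (forall i, i \notin C' -> y i = 0) ->
      (forall i, i \in C' -> K%:R * y i = y (u i) + K.-1%:R * y (w i)) ->
      forall i, y i <= 0.
    move=> y' H1 H2.
    apply: (maxp (e := fun x0 y : 'Z_p => (x0 \in D) && ((y == u x0) || (y == w x0))) (u := u) (w := w) K1 v0C' _ _ H1 H2).
      by move=> x /C'C; apply: Csc.
    by move=> x z' _ /andP [_ /orP [] /eqP ->]; [left | right].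
  have Hall : forall i, y i = 0.
    move=> i; apply/eqP; rewrite eq_le Hle //= -oppr_le0.
    apply: (Hle (fun i => - y i)) => [j /Hy0 ->|j /Hrel H]; rewrite ?oppr0 //.
    by rewrite mulrN H opprD mulrN.
  move/negP: vn0; apply; apply/eqP/matrixP => i j.
  by rewrite (ord1 i) mxE; apply: Hall.
have p1 : (1 < p)%N by apply: prime_gt1.
have Hunit : ~~ (\det (Nm 'Z_p) \is a GRing.unit).
  apply/negP => Hu.
  pose g (j : 'Z_p) : 'Z_p := if j \in C' then j - v0 else 0.
  have gC : forall x, x \in C -> g x = x - v0.
    move=> x xC; rewrite /g !inE xC andbT; case: eqP => [->|//].
    by rewrite subrr.
  pose Y : 'cV['Z_p]_n := \col_i g i.
  have NY : Nm 'Z_p *m Y = 0.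
    apply/colP => i; rewrite !mxE.
    under eq_bigr => j _ do rewrite !mxE.
    case: (boolP (i \in C')) => iC /=.
    - have E : forall x j, ((j \in C') && (j == x))%:R * g j = (j == x)%:R * g j.
        move=> x j; case: (boolP (j \in C')) => jC //=.
        by rewrite /g (negPf jC) !mulr0.
      under eq_bigr => j _ do rewrite mulrBl mulrBl E -mulrA E natrM.
      rewrite (eq_bigr (fun j => K%:R * (g j * (j == i)%:R) - g j * (j == u i)%:R - K.-1%:R * (g j * (j == w i)%:R))); last by move=> j _; rewrite (eq_sym i j); ring.
      rewrite !sumrB -!mulr_sumr !sum_delta.
      have iCC := C'C _ iC.
      have [uC wC] := Ccl _ iCC.
      rewrite !gC //.
      have iD : i \in D by apply: (subsetP CD).
      have [_ _ _ Hr] := HD i iD.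
      rewrite (HK 'Z_p) in Hr *.
      apply/eqP; rewrite subr_eq0; apply/eqP.
      rewrite mulrBr Hr; ring.
    - under eq_bigr => j _ do rewrite mulr0 !subr0 mulrC eq_sym.
      by rewrite sum_delta /g (negPf iC).
  have : invmx (Nm 'Z_p) *m (Nm 'Z_p *m Y) = Y by apply: mulKmx; rewrite unitmxE.
  rewrite NY mulmx0 => /esym/colP/(_ (u v0)); rewrite !mxE.
  have v0D : v0 \in D by apply: (subsetP CD).
  have [uD _ uv0 _] := HD v0 v0D.
  have [uC _] := Ccl _ v0C.
  rewrite gC //; move/eqP; rewrite subr_eq0; exact/negP.
have zpos : 0 < z by rewrite -(ltr0z rat) Hz lt_def Hne Hge.
have [m zm] : exists m, z = m%:Z.
  by move: zpos; case: (z) => [m|m] // _; exists m.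
have Hzm : forall R : comNzRingType, (z%:~R : R) = m%:R by move=> R; rewrite zm pmulrn.
have mpos : (0 < m)%N by rewrite -ltz_nat -zm.
have mle : (m <= K ^ #|C'|)%N by rewrite -(ler_nat rat) -Hzm Hz.
have pm : (p <= m)%N.
  apply: dvdn_leq => //; move: Hunit; rewrite -Hz Hzm unitZpE // prime_coprime //.
  by move/negPn.
have cC : (#|C'| <= #|D|.-1)%N.
  have := cardsD1 v0 C; rewrite v0C /= add1n => E.
  have := subset_leq_card CD; rewrite E -/C'.
  by case: #|D|.
apply: (leq_trans pm); apply: (leq_trans mle).
by apply: leq_pexp2l => //; apply: ltnW.
Qed.

Lemma caseA p (a : 'Z_p) (f g : 'Z_p -> 'Z_p) (K : nat) (D : {set 'Z_p}) :
  a \is a GRing.unit -> (a - 1) \is a GRing.unit -> cancel g f ->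
  injective (fun x => f x - x) -> K%:R = a -> K.-1%:R = a - 1 ->
  (forall x, (x \in D) = (a * x != f x)) ->
  forall v, v \in D ->
   [/\ g (a * v) \in D, (a - 1)^-1 * (a * v - g (a * v)) \in D, g (a * v) != v &
      (K%:R : 'Z_p) * v = g (a * v) + K.-1%:R * ((a - 1)^-1 * (a * v - g (a * v)))].
Proof.
move=> aU bU gf pinj HK HK1 HDm v; rewrite !HDm => vD.
set x := g (a * v).
have fx : f x = a * v by rewrite /x gf.
have xv : x != v.
  apply/eqP => E; have fv : f v = a * v by rewrite -{1}E fx.
  by move: vD; rewrite fv eqxx.
split => //.
- rewrite fx; apply/eqP => /(mulrI aU) E; by rewrite E eqxx in xv.
- pose y := (a - 1)^-1 * (a * v - x); rewrite -/y; apply/eqP => E.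
  have : f y - y = f x - x.
    rewrite -E fx.
    have -> : a * y - y = (a - 1) * y by rewrite mulrBl mul1r.
    by rewrite /y mulrA mulrV // mul1r.
  move/pinj => yx.
  move: E; rewrite yx fx => /(mulrI aU) E; by rewrite E eqxx in xv.
- by rewrite HK HK1 mulrA mulrV // mul1r addrC subrK.
Qed.

Lemma caseB p (a : 'Z_p) (f g : 'Z_p -> 'Z_p) (K : nat) (D : {set 'Z_p}) :
  a \is a GRing.unit -> (a - 1) \is a GRing.unit -> cancel f g ->
  injective (fun x => f x - x) -> K%:R = a^-1 -> K.-1%:R = a^-1 - 1 ->
  (forall x, (x \in D) = (a * x != f x)) ->
  forall v, v \in D ->
   [/\ a^-1 * f v \in D, (a - 1)^-1 * (f v - v) \in D, a^-1 * f v != v &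
      (K%:R : 'Z_p) * v = a^-1 * f v + K.-1%:R * ((a - 1)^-1 * (f v - v))].
Proof.
move=> aU bU fg pinj HK HK1 HDm v; rewrite !HDm => vD.
have finj : injective f := can_inj fg.
have au : a * (a^-1 * f v) = f v by rewrite mulrA mulrV ?mul1r.
have uv : a^-1 * f v != v by apply/eqP => E; move: vD; rewrite -{1}E au eqxx.
split => //.
- rewrite au; apply/eqP => /finj E; by rewrite -E eqxx in uv.
- pose y := (a - 1)^-1 * (f v - v); rewrite -/y; apply/eqP => E.
  have : f y - y = f v - v.
    rewrite -E.
    have -> : a * y - y = (a - 1) * y by rewrite mulrBl mul1r.
    by rewrite /y mulrA mulrV // mul1r.
  move/pinj => yv.
  move: E; rewrite yv => E.
  by move: vD; rewrite E eqxx.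
- rewrite HK HK1.
  have e1 : a * a^-1 = 1 by rewrite mulrV.
  have e2 : (a - 1) * (a - 1)^-1 = 1 by rewrite mulrV.
  apply/eqP; rewrite -subr_eq0; apply/eqP.
  transitivity ((f v - v) * ((a^-1) * ((a - 1) * (a - 1)^-1 - 1) - (a - 1)^-1 * (a * a^-1 - 1))); first ring.
  by rewrite e1 e2 !subrr !mulr0 subrr mulr0.
Qed.

Lemma val_natZp (p k : nat) : (1 < p)%N -> (k < p)%N -> nat_of_ord (k%:R : 'Z_p) = k.
Proof. by move=> p1 kp; rewrite Zp_nat /= Zp_cast // modn_small. Qed.

Local Close Scope ring_scope.

Theorem theorem6p1 (p k : nat) (phi' : 'Z_p -> 'Z_p) :
  prime p -> odd p ->
  (2 <= k)%N -> (k <= p.-1)%N ->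
  orthomorphism p phi' ->
  mulmap p k <> phi' ->
  let K := minn k (inv_mod p k) in
  Rge (INR (odist p (mulmap p k) phi')) (Rplus (Rdiv (ln (INR p)) (ln (INR K))) (INR 1)).
Proof.
Local Open Scope ring_scope.
move=> pr podd k2 kp [[g fg gf] hpsi] ne K.
have pinj : injective (fun x => phi' x - x)%R := bij_inj hpsi.
pose D := [set x : 'Z_p | mulmap p k x != phi' x].
have Dn0 : D != set0.
  apply/negP => /eqP D0; apply: ne; apply: functional_extensionality => x.
  apply/eqP; apply/negPn/negP => H.
  have : x \in D by rewrite inE.
  by rewrite D0 inE.
have p1 : (1 < p)%N by apply: prime_gt1.
have kp' : (k < p)%N by apply: leq_ltn_trans kp _; rewrite ltn_predL prime_gt0.
have k0 : (0 < k)%N by apply: leq_trans k2.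
pose a : 'Z_p := (k%:R)%R.
have aU : a \is a GRing.unit.
  by rewrite /a unitZpE // prime_coprime // gtnNdvd.
have k1 : (k.-1%:R : 'Z_p) = (a - 1)%R by rewrite /a -[in RHS](prednK k0) -natr1 GRing.addrK.
have bU : (a - 1)%R \is a GRing.unit.
  rewrite -k1 unitZpE // prime_coprime // gtnNdvd //.
    by rewrite -ltnS prednK.
  by apply: leq_ltn_trans kp'; apply: leq_pred.
pose k' := inv_mod p k.
have k'E : (k'%:R : 'Z_p) = (a^-1)%R by rewrite /k' /inv_mod natr_Zp.
have k'2 : (2 <= k')%N.
  case E : k' => [|[|m]] //.
  - have : (a * a^-1 = 1)%R by rewrite GRing.mulrV.
    by rewrite -k'E E GRing.mulr0 => /esym/eqP; rewrite GRing.oner_eq0.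
  - have : a = 1%R.
      by rewrite -[a]GRing.invrK -k'E E GRing.invr1.
    move/(congr1 (@nat_of_ord _)); rewrite /a val_natZp // (val_natZp (k := 1)) //.
    by move=> E1; rewrite E1 in k2.
have k'1 : (k'.-1%:R : 'Z_p) = (a^-1 - 1)%R.
  by rewrite -k'E -[in RHS](prednK (leq_trans _ k'2)) // -natr1 GRing.addrK.
have HDm : forall x, (x \in D) = (a * x != phi' x)%R by move=> x; rewrite inE.
have Hp : (p <= K ^ #|D|.-1)%N.
  rewrite /K -/k'; case: (leqP k k') => h.
  - idtac.
    exact: (@core p k D (fun v => g (a * v))%R (fun v => (a - 1)^-1 * (a * v - g (a * v)))%R
              pr k2 Dn0 (caseA aU bU gf pinj erefl k1 HDm)).
  - idtac.
    exact: (@core p k' D (fun v => a^-1 * phi' v)%R (fun v => (a - 1)^-1 * (phi' v - v))%R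
              pr k'2 Dn0 (caseB aU bU fg pinj k'E k'1 HDm)).
have K2 : (2 <= K)%N by rewrite leq_min k2 k'2.
have d0 : (0 < #|D|)%N by rewrite card_gt0.
have := real_part _ _ _ K2 (prime_gt0 pr) d0 Hp.
by rewrite /odist.
Qed.
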